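(* Let $m,n\ge 1$ and let $H^X,H^Z\in\mathbb F_2^{m\times n}$ satisfy $H^X(H^Z)^{\mathsf T}=0$ over $\mathbb F_2$. For $i\in\{1,\dots,m\}$ and $j\in\{1,\dots,n\}$ put $\partial_i^X=\{j: H^X_{ij}=1\}$, $\partial_i^Z=\{j: H^Z_{ij}=1\}$, $\partial_j^X=\{i: H^X_{ij}=1\}$, $\partial_j^Z=\{i: H^Z_{ij}=1\}$. Fix syndromes $\boldsymbol s^X,\boldsymbol s^Z\in\mathbb F_2^m$ and, for each $j$, a local prior $Q_j:\mathbb F_2^2\to[0,\infty)$ (a probability distribution on $(x_j,z_j)$). Let $\mathbb F_4=\{0,1,\omega,\omega^2\}$ with $\omega^2=\omega+1$, let $\phi:\mathbb F_2^2\to\mathbb F_4$, $\phi(x,z)=x+\omega z$ (a bijection), write $\phi^{-1}(\alpha)=(x(\alpha),z(\alpha))$, and set $Q_j^\phi(\alpha)=Q_j(x(\alpha),z(\alpha))$. Define the joint binary posterior on $(\boldsymbol x,\boldsymbol z)\in\mathbb F_2^n\times\mathbb F_2^n$ $$P_2(\boldsymbol x,\boldsymbol z\mid \boldsymbol s^X,\boldsymbol s^Z)=\frac1{Z_2}\prod_{j=1}^n Q_j(x_j,z_j)\prod_{i=1}^m\mathbf 1\Big\{\textstyle\sum_{j'\in\partial_i^X} z_{j'}=s_i^Z\Big\}\prod_{i=1}^m\mathbf 1\Big\{\textstyle\sum_{j'\in\partial_i^Z} x_{j'}=s_i^X\Big\},$$ and the four-state posterior on $\boldsymbol\alpha\in\mathbb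 F_4^n$ $$P_4(\boldsymbol\alpha\mid \boldsymbol s^X,\boldsymbol s^Z)=\frac1{Z_4}\prod_{j=1}^n Q_j^\phi(\alpha_j)\prod_{i=1}^m\mathbf 1\Big\{\textstyle\sum_{j\in\partial_i^X} z(\alpha_j)=s_i^Z\Big\}\prod_{i=1}^m\mathbf 1\Big\{\textstyle\sum_{j\in\partial_i^Z} x(\alpha_j)=s_i^X\Big\},$$ where all sums in indicators are in $\mathbb F_2$ and $Z_2,Z_4$ are normalizing constants (assumed positive). Joint BP (sum-product on the first factorization): for iterations $\ell=0,1,2,\dots$, given check-to-variable messages $\widehat\nu^{(\ell)}_{i\to j}(z)$ ($i\in\partial^X_j$) and $\widehat\mu^{(\ell)}_{i\to j}(x)$ ($i\in\partial_j^Z$), define $$\nu^{(\ell)}_{j\to i}(z)\propto\sum_{x\in\mathbb F_2}Q_j(x,z)\prod_{k\in\partial_j^X\setminus\{i\}}\widehat\nu^{(\ell)}_{k\to j}(z)\prod_{k\in\partial_j^Z}\widehat\mu^{(\ell)}_{k\to j}(x),\quad i\in\partial^X_j,$$ $$\mu^{(\ell)}_{j\to i}(x)\propto\sum_{z\in\mathbb F_2}Q_j(x,z)\prod_{k\in\partial_j^X}\widehat\nu^{(\ell)}_{k\to j}(z)\prod_{k\in\partial_j^Z\setminus\{i\}}\widehat\mu^{(\ell)}_{k\to j}(x),\quad i\in\partial^Z_j,$$ $$\widehat\nu^{(\ell+1)}_{i\to j}(z)\propto\sum_{\substack{(z_b)_{b\in\partial_i^X\setminus\{j\}}\\ z+\sum_b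 z_b=s_i^Z}}\ \prod_{b\in\partial_i^X\setminus\{j\}}\nu^{(\ell)}_{b\to i}(z_b),\qquad \widehat\mu^{(\ell+1)}_{i\to j}(x)\propto\sum_{\substack{(x_b)_{b\in\partial_i^Z\setminus\{j\}}\\ x+\sum_b x_b=s_i^X}}\ \prod_{b\in\partial_i^Z\setminus\{j\}}\mu^{(\ell)}_{b\to i}(x_b),$$ and beliefs $b^{(\ell)}_{2,j}(x,z)\propto Q_j(x,z)\prod_{i\in\partial_j^X}\widehat\nu^{(\ell)}_{i\to j}(z)\prod_{i\in\partial_j^Z}\widehat\mu^{(\ell)}_{i\to j}(x)$. Four-state BP (sum-product on the second factorization): given $\widehat m^{X,(\ell)}_{i\to j}(\alpha)$ ($i\in\partial_j^X$) and $\widehat m^{Z,(\ell)}_{i\to j}(\alpha)$ ($i\in\partial^Z_j$), define $$m^{X,(\ell)}_{j\to i}(\alpha)\propto Q^\phi_j(\alpha)\prod_{k\in\partial_j^X\setminus\{i\}}\widehat m^{X,(\ell)}_{k\to j}(\alpha)\prod_{k\in\partial_j^Z}\widehat m^{Z,(\ell)}_{k\to j}(\alpha),\qquad m^{Z,(\ell)}_{j\to i}(\alpha)\propto Q^\phi_j(\alpha)\prod_{k\in\partial_j^X}\widehat m^{X,(\ell)}_{k\to j}(\alpha)\prod_{k\in\partial_j^Z\setminus\{i\}}\widehat m^{Z,(\ell)}_{k\to j}(\alpha),$$ $$\widehat m^{X,(\ell+1)}_{i\to j}(\alpha)\propto\sum_{\substack{(\alpha_b)_{b\in\partial_i^X\setminus\{j\}}\\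 z(\alpha)+\sum_b z(\alpha_b)=s_i^Z}}\ \prod_{b}m^{X,(\ell)}_{b\to i}(\alpha_b),\qquad \widehat m^{Z,(\ell+1)}_{i\to j}(\alpha)\propto\sum_{\substack{(\alpha_b)_{b\in\partial_i^Z\setminus\{j\}}\\ x(\alpha)+\sum_b x(\alpha_b)=s_i^X}}\ \prod_{b}m^{Z,(\ell)}_{b\to i}(\alpha_b),$$ and beliefs $b^{(\ell)}_{4,j}(\alpha)\propto Q_j^\phi(\alpha)\prod_{i\in\partial_j^X}\widehat m^{X,(\ell)}_{i\to j}(\alpha)\prod_{i\in\partial_j^Z}\widehat m^{Z,(\ell)}_{i\to j}(\alpha)$. Assume the two decoders are initialized compatibly, i.e. for all $j$, $x,z\in\mathbb F_2$: $\widehat m^{X,(0)}_{i\to j}(\phi(x,z))\propto\widehat\nu^{(0)}_{i\to j}(z)$ for $i\in\partial_j^X$ and $\widehat m^{Z,(0)}_{i\to j}(\phi(x,z))\propto\widehat\mu^{(0)}_{i\to j}(x)$ for $i\in\partial_j^Z$ (e.g. all initial check-to-variable messages uniform). Then: (1) For all $\boldsymbol x,\boldsymbol z\in\mathbb F_2^n$, $P_4(\phi(\boldsymbol x,\boldsymbol z)\mid\boldsymbol s^X,\boldsymbol s^Z)=P_2(\boldsymbol x,\boldsymbol z\mid\boldsymbol s^X,\boldsymbol s^Z)$, where $\phi(\boldsymbol x,\boldsymbol z)_j=\phi(x_j,z_j)$. (2) For every iteration $\ell$, every $j$ and all $x,z\in\mathbb F_2$: $\widehat m^{X,(\ell)}_{i\to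 j}(\phi(x,z))\propto\widehat\nu^{(\ell)}_{i\to j}(z)$ for $i\in\partial_j^X$, and $\widehat m^{Z,(\ell)}_{i\to j}(\phi(x,z))\propto\widehat\mu^{(\ell)}_{i\to j}(x)$ for $i\in\partial_j^Z$. (3) For every $\ell$: $\nu^{(\ell)}_{j\to i}(z)\propto\sum_{x\in\mathbb F_2}m^{X,(\ell)}_{j\to i}(\phi(x,z))$ for $i\in\partial_j^X$, and $\mu^{(\ell)}_{j\to i}(x)\propto\sum_{z\in\mathbb F_2}m^{Z,(\ell)}_{j\to i}(\phi(x,z))$ for $i\in\partial_j^Z$. (4) For every $\ell$, $j\in\{1,\dots,n\}$ and $(\xi,\zeta)\in\mathbb F_2^2$, the normalized beliefs satisfy $b^{(\ell)}_{4,j}(\phi(\xi,\zeta))=b^{(\ell)}_{2,j}(\xi,\zeta)$. (5) Consequently, fixing any tie-breaking order on $\mathbb F_2^2$ and the induced order on $\mathbb F_4$ via $\phi$, the hard decisions $\widehat\alpha^{(\ell)}_j=\arg\max_{\alpha\in\mathbb F_4}b^{(\ell)}_{4,j}(\alpha)$ and $(\widetilde x^{(\ell)}_j,\widetilde z^{(\ell)}_j)=\arg\max_{(x,z)\in\mathbb F_2^2}b^{(\ell)}_{2,j}(x,z)$ satisfy $\widehat\alpha^{(\ell)}_j=\phi(\widetilde x^{(\ell)}_j,\widetilde z^{(\ell)}_j)$.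
   Context: Messages are nonnegative functions on the alphabet of a single variable ($\mathbb F_2$ or $\mathbb F_4$), identified up to multiplication by a positive constant; the symbol $\propto$ means equality up to such a positive (edge-local) constant. Beliefs are normalized to probability distributions (they are assumed not identically zero). The hard-decision argmax ties are broken by the fixed common order. This describes CSS syndrome decoding: $x_j,z_j$ are the $X$- and $Z$-components of the Pauli error on qubit $j$, rows of $H^X$ constrain $\boldsymbol z$ via $H^X\boldsymbol z=\boldsymbol s^Z$ and rows of $H^Z$ constrain $\boldsymbol x$ via $H^Z\boldsymbol x=\boldsymbol s^X$. *)

(* Defs.v *)
From HB Require Import structures.
From mathcomp Require Import all_boot all_order all_algebra.
Set Implicit Arguments. Unset Strict Implicit. Unset Printing Implicit Defensive.
Import Order.TTheory GRing.Theory Num.Theory.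
Local Open Scope ring_scope.

Notation F2 := 'F_2.

(* F_4 = {0, 1, w, w^2} with w^2 = w + 1; only its elements and the map phi
   (and its inverse) are used by the statement. *)
Inductive F4 := F4_0 | F4_1 | F4_w | F4_w2.

Definition F4_to_pair (a : F4) : bool * bool :=
  match a with F4_0 => (false, false) | F4_1 => (true, false)
             | F4_w => (false, true) | F4_w2 => (true, true) end.
Definition F4_of_pair (p : bool * bool) : F4 :=
  match p with (false, false) => F4_0 | (true, false) => F4_1
             | (false, true) => F4_w | (true, true) => F4_w2 end.
Lemma F4_pairK : cancel F4_to_pair F4_of_pair. Proof. by case. Qed.
HB.instance Definition _ := Finite.copy F4 (can_type F4_pairK).

(* phi(x,z) = x + w z *)
Definition phi (x z : F2) : F4 :=
  if x == 0 then (if z == 0 then F4_0 else F4_w)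
  else (if z == 0 then F4_1 else F4_w2).

Definition xF4 (a : F4) : F2 :=
  match a with F4_0 | F4_w => 0 | F4_1 | F4_w2 => 1 end.
Definition zF4 (a : F4) : F2 :=
  match a with F4_0 | F4_1 => 0 | F4_w | F4_w2 => 1 end.

Section Defs.
Variables (R : realFieldType) (m n : nat).
Variables (HX HZ : 'M[F2]_(m, n)) (sX sZ : 'I_m -> F2).
Variable Q : 'I_n -> F2 -> F2 -> R.

Definition dchk (H : 'M[F2]_(m, n)) (i : 'I_m) : {set 'I_n} := [set j | H i j == 1].
Definition dvar (H : 'M[F2]_(m, n)) (j : 'I_n) : {set 'I_m} := [set i | H i j == 1].

Definition propto (T : Type) (f g : T -> R) := exists2 c : R, 0 < c & forall a, f a = c * g a.

Definition sub (S : {set 'I_n}) := {b : 'I_n | b \in S}.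

Definition Qphi (j : 'I_n) (a : F4) : R := Q j (xF4 a) (zF4 a).

Definition w2 (x z : {ffun 'I_n -> F2}) : R :=
  (\prod_(j < n) Q j (x j) (z j)) *
  (\prod_(i < m) ((\sum_(j' in dchk HX i) z j') == sZ i)%:R) *
  (\prod_(i < m) ((\sum_(j' in dchk HZ i) x j') == sX i)%:R).
Definition Z2 : R := \sum_(x : {ffun 'I_n -> F2}) \sum_(z : {ffun 'I_n -> F2}) w2 x z.
Definition P2 x z : R := w2 x z / Z2.

Definition w4 (a : {ffun 'I_n -> F4}) : R :=
  (\prod_(j < n) Qphi j (a j)) *
  (\prod_(i < m) ((\sum_(j in dchk HX i) zF4 (a j)) == sZ i)%:R) *
  (\prod_(i < m) ((\sum_(j in dchk HZ i) xF4 (a j)) == sX i)%:R).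
Definition Z4 : R := \sum_(a : {ffun 'I_n -> F4}) w4 a.
Definition P4 a : R := w4 a / Z4.

Definition phivec (x z : {ffun 'I_n -> F2}) : {ffun 'I_n -> F4} :=
  [ffun j => phi (x j) (z j)].

(* check-to-variable messages: 'I_m -> 'I_n -> F2 -> R  (i -> j)
   variable-to-check messages: 'I_n -> 'I_m -> F2 -> R  (j -> i) *)
Definition nu_upd (nuh muh : 'I_m -> 'I_n -> F2 -> R) (j : 'I_n) (i : 'I_m) (z : F2) : R :=
  \sum_(x : F2) Q j x z * (\prod_(k in dvar HX j :\ i) nuh k j z)
                        * (\prod_(k in dvar HZ j) muh k j x).
Definition mu_upd (nuh muh : 'I_m -> 'I_n -> F2 -> R) (j : 'I_n) (i : 'I_m) (x : F2) : R :=
  \sum_(z : F2) Q j x z * (\prod_(k in dvar HX j) nuh k j z)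
                        * (\prod_(k in dvar HZ j :\ i) muh k j x).
Definition nuh_upd (nu : 'I_n -> 'I_m -> F2 -> R) (i : 'I_m) (j : 'I_n) (z : F2) : R :=
  \sum_(w : {ffun sub (dchk HX i :\ j) -> F2} | z + \sum_b w b == sZ i)
     \prod_b nu (val b) i (w b).
Definition muh_upd (mu : 'I_n -> 'I_m -> F2 -> R) (i : 'I_m) (j : 'I_n) (x : F2) : R :=
  \sum_(w : {ffun sub (dchk HZ i :\ j) -> F2} | x + \sum_b w b == sX i)
     \prod_b mu (val b) i (w b).
Definition b2u (nuh muh : 'I_m -> 'I_n -> F2 -> R) (j : 'I_n) (x z : F2) : R :=
  Q j x z * (\prod_(i in dvar HX j) nuh i j z) * (\prod_(i in dvar HZ j) muh i j x).
Definition b2 (nuh muh : 'I_m -> 'I_n -> F2 -> R) (j : 'I_n) (x z : F2) : R :=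
  b2u nuh muh j x z / (\sum_(x' : F2) \sum_(z' : F2) b2u nuh muh j x' z').

Definition mX_upd (mXh mZh : 'I_m -> 'I_n -> F4 -> R) (j : 'I_n) (i : 'I_m) (a : F4) : R :=
  Qphi j a * (\prod_(k in dvar HX j :\ i) mXh k j a) * (\prod_(k in dvar HZ j) mZh k j a).
Definition mZ_upd (mXh mZh : 'I_m -> 'I_n -> F4 -> R) (j : 'I_n) (i : 'I_m) (a : F4) : R :=
  Qphi j a * (\prod_(k in dvar HX j) mXh k j a) * (\prod_(k in dvar HZ j :\ i) mZh k j a).
Definition mXh_upd (mX : 'I_n -> 'I_m -> F4 -> R) (i : 'I_m) (j : 'I_n) (a : F4) : R :=
  \sum_(w : {ffun sub (dchk HX i :\ j) -> F4} | zF4 a + \sum_b zF4 (w b) == sZ i)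
     \prod_b mX (val b) i (w b).
Definition mZh_upd (mZ : 'I_n -> 'I_m -> F4 -> R) (i : 'I_m) (j : 'I_n) (a : F4) : R :=
  \sum_(w : {ffun sub (dchk HZ i :\ j) -> F4} | xF4 a + \sum_b xF4 (w b) == sX i)
     \prod_b mZ (val b) i (w b).
Definition b4u (mXh mZh : 'I_m -> 'I_n -> F4 -> R) (j : 'I_n) (a : F4) : R :=
  Qphi j a * (\prod_(i in dvar HX j) mXh i j a) * (\prod_(i in dvar HZ j) mZh i j a).
Definition b4 (mXh mZh : 'I_m -> 'I_n -> F4 -> R) (j : 'I_n) (a : F4) : R :=
  b4u mXh mZh j a / (\sum_(a' : F4) b4u mXh mZh j a').

End Defs.

(* hard decision: the first element of the tie-breaking order s attaining the
   maximum of b (the default d is never used when s enumerates the whole type) *)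
Definition argmax_by (R : realFieldType) (T : finType) (s : seq T) (d : T) (b : T -> R) : T :=
  head d [seq p <- s | [forall q, b q <= b p]].

(* Main.v *)
Require Import Defs.
From HB Require Import structures.
From mathcomp Require Import all_boot all_order all_algebra.
From mathcomp Require Import ring.
Import Order.TTheory GRing.Theory Num.Theory.
Local Open Scope ring_scope.

Lemma F2_cases (x : F2) : x = 0 \/ x = 1.
Proof. case: x => [[|[|k]]] //= Hk; [left|right]; exact: val_inj. Qed.
Lemma phiK1 x z : xF4 (phi x z) = x.
Proof. by case: (F2_cases x) => ->; case: (F2_cases z) => ->. Qed.
Lemma phiK2 x z : zF4 (phi x z) = z.
Proof. by case: (F2_cases x) => ->; case: (F2_cases z) => ->. Qed.
Lemma phiK3 a : phi (xF4 a) (zF4 a) = a.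
Proof. by case: a. Qed.

Section Gen.
Variable R : realFieldType.

Lemma sumF4 (f : F4 -> R) : \sum_a f a = \sum_(x : F2) \sum_(z : F2) f (phi x z).
Proof.
rewrite pair_big /=.
rewrite (reindex (fun p : F2 * F2 => phi p.1 p.2)) //.
apply: onW_bij; exists (fun a => (xF4 a, zF4 a)).
  by case=> x z; rewrite /= phiK1 phiK2.
by move=> a; rewrite /= phiK3.
Qed.

Lemma sum_ffunF4 (S : finType) (psi : F2 -> F2 -> F4) (p1 p2 : F4 -> F2)
  (K1 : forall u t, p1 (psi u t) = u) (K2 : forall u t, p2 (psi u t) = t)
  (K3 : forall a, psi (p1 a) (p2 a) = a) (F : {ffun S -> F4} -> R) :
  \sum_w F w = \sum_(w1 : {ffun S -> F2}) \sum_(w2 : {ffun S -> F2})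
      F [ffun b => psi (w1 b) (w2 b)].
Proof.
rewrite pair_big /=.
rewrite (reindex (fun p : {ffun S -> F2} * {ffun S -> F2} => [ffun b => psi (p.1 b) (p.2 b)])) //.
apply: onW_bij; exists (fun w : {ffun S -> F4} => ([ffun b => p1 (w b)], [ffun b => p2 (w b)]) : {ffun S -> F2} * {ffun S -> F2}).
  case=> w1 w2 /=; congr pair; apply/ffunP => b; by rewrite !ffunE.
by move=> w; apply/ffunP => b; rewrite /= !ffunE.
Qed.

Lemma prod_propto (I : Type) (r : seq I) (P : pred I) (T : Type) (f g : I -> T -> R) :
  (forall b, P b -> exists2 c : R, 0 < c & forall t, f b t = c * g b t) ->
  exists2 C : R, 0 < C & forall w : I -> T,
    \prod_(b <- r | P b) f b (w b) = C * \prod_(b <- r | P b) g b (w b).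
Proof.
move=> H; elim: r => [|b r [C C0 IH]].
  by exists 1 => // w; rewrite !big_nil mul1r.
rewrite /=.
case Pb: (P b).
  have [c c0 Hc] := H b Pb.
  exists (c * C); first exact: mulr_gt0.
  by move=> w; rewrite !big_cons Pb Hc IH; ring.
by exists C => // w; rewrite !big_cons Pb IH.
Qed.

Lemma check_sum (S : finType) (psi : F2 -> F2 -> F4) (p1 p2 : F4 -> F2)
  (K1 : forall u t, p1 (psi u t) = u) (K2 : forall u t, p2 (psi u t) = t)
  (K3 : forall a, psi (p1 a) (p2 a) = a) (f : S -> F4 -> R) (t0 s : F2) :
  \sum_(w : {ffun S -> F4} | t0 + \sum_b p2 (w b) == s) \prod_b f b (w b) =
  \sum_(w : {ffun S -> F2} | t0 + \sum_b w b == s) \prod_b \sum_(u : F2) f b (psi u (w b)).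
Proof.
rewrite big_mkcond (@sum_ffunF4 _ _ _ _ K1 K2 K3) /=.
rewrite exchange_big /= [RHS]big_mkcond /=.
apply: eq_bigr => w2 _.
have E w1 : (t0 + \sum_b p2 ([ffun b0 => psi (w1 b0) (w2 b0)] b) == s) = (t0 + \sum_b w2 b == s).
  by congr (_ + _ == _); apply: eq_bigr => b _; rewrite ffunE K2.
under eq_bigr => w1 _ do rewrite E.
case: ifP => _; last by rewrite big1.
rewrite bigA_distr_bigA /=; apply: eq_bigr => w1 _; apply: eq_bigr => b _; by rewrite ffunE.
Qed.

End Gen.

Theorem theorem1
  (R : realFieldType) (m n : nat) (Hm : (0 < m)%N) (Hn : (0 < n)%N)
  (HX HZ : 'M[F2]_(m, n)) (Horth : HX *m HZ^T = 0)
  (sX sZ : 'I_m -> F2)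
  (Q : 'I_n -> F2 -> F2 -> R)
  (Q_ge0 : forall j x z, 0 <= Q j x z)
  (Q_sum1 : forall j, \sum_(x : F2) \sum_(z : F2) Q j x z = 1)
  (Z2_gt0 : 0 < Z2 HX HZ sX sZ Q)
  (Z4_gt0 : 0 < Z4 HX HZ sX sZ Q)
  (* joint binary BP messages *)
  (nuh muh : nat -> 'I_m -> 'I_n -> F2 -> R)
  (nu mu : nat -> 'I_n -> 'I_m -> F2 -> R)
  (* four-state BP messages *)
  (mXh mZh : nat -> 'I_m -> 'I_n -> F4 -> R)
  (mX mZ : nat -> 'I_n -> 'I_m -> F4 -> R)
  (* messages are nonnegative *)
  (nuh_ge0 : forall l i j z, 0 <= nuh l i j z)
  (muh_ge0 : forall l i j x, 0 <= muh l i j x)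
  (nu_ge0 : forall l j i z, 0 <= nu l j i z)
  (mu_ge0 : forall l j i x, 0 <= mu l j i x)
  (mXh_ge0 : forall l i j a, 0 <= mXh l i j a)
  (mZh_ge0 : forall l i j a, 0 <= mZh l i j a)
  (mX_ge0 : forall l j i a, 0 <= mX l j i a)
  (mZ_ge0 : forall l j i a, 0 <= mZ l j i a)
  (* joint BP update rules (up to positive constants) *)
  (nu_def : forall l j i, i \in dvar HX j ->
     propto (nu l j i) (nu_upd HX HZ Q (nuh l) (muh l) j i))
  (mu_def : forall l j i, i \in dvar HZ j ->
     propto (mu l j i) (mu_upd HX HZ Q (nuh l) (muh l) j i))
  (nuh_def : forall l i j, j \in dchk HX i ->
     propto (nuh l.+1 i j) (nuh_upd HX sZ (nu l) i j))
  (muh_def : forall l i j, j \in dchk HZ i ->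
     propto (muh l.+1 i j) (muh_upd HZ sX (mu l) i j))
  (* four-state BP update rules (up to positive constants) *)
  (mX_def : forall l j i, i \in dvar HX j ->
     propto (mX l j i) (mX_upd HX HZ Q (mXh l) (mZh l) j i))
  (mZ_def : forall l j i, i \in dvar HZ j ->
     propto (mZ l j i) (mZ_upd HX HZ Q (mXh l) (mZh l) j i))
  (mXh_def : forall l i j, j \in dchk HX i ->
     propto (mXh l.+1 i j) (mXh_upd HX sZ (mX l) i j))
  (mZh_def : forall l i j, j \in dchk HZ i ->
     propto (mZh l.+1 i j) (mZh_upd HZ sX (mZ l) i j))
  (* beliefs are not identically zero *)
  (b2_nz : forall l j, \sum_(x : F2) \sum_(z : F2) b2u HX HZ Q (nuh l) (muh l) j x z != 0)
  (b4_nz : forall l j, \sum_(a : F4) b4u HX HZ Q (mXh l) (mZh l) j a != 0)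
  (* compatible initialization *)
  (initX : forall j i, i \in dvar HX j ->
     propto (fun p : F2 * F2 => mXh 0%N i j (phi p.1 p.2)) (fun p => nuh 0%N i j p.2))
  (initZ : forall j i, i \in dvar HZ j ->
     propto (fun p : F2 * F2 => mZh 0%N i j (phi p.1 p.2)) (fun p => muh 0%N i j p.1)) :
  [/\
   (* (1) *)
   (forall x z : {ffun 'I_n -> F2},
      P4 HX HZ sX sZ Q (phivec x z) = P2 HX HZ sX sZ Q x z),
   (* (2) *)
   (forall l j, (forall i, i \in dvar HX j ->
       propto (fun p : F2 * F2 => mXh l i j (phi p.1 p.2)) (fun p => nuh l i j p.2)) /\
     (forall i, i \in dvar HZ j ->
       propto (fun p : F2 * F2 => mZh l i j (phi p.1 p.2)) (fun p => muh l i j p.1))),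
   (* (3) *)
   (forall l j, (forall i, i \in dvar HX j ->
       propto (nu l j i) (fun z => \sum_(x : F2) mX l j i (phi x z))) /\
     (forall i, i \in dvar HZ j ->
       propto (mu l j i) (fun x => \sum_(z : F2) mZ l j i (phi x z)))),
   (* (4) *)
   (forall l j (xi zeta : F2),
      b4 HX HZ Q (mXh l) (mZh l) j (phi xi zeta) = b2 HX HZ Q (nuh l) (muh l) j xi zeta)
   & (* (5) *)
   (forall (s : seq (F2 * F2)), uniq s -> (forall p, p \in s) ->
    forall l j,
      argmax_by [seq phi p.1 p.2 | p <- s] (phi 0 0) (b4 HX HZ Q (mXh l) (mZh l) j)
      = (let p := argmax_by s (0, 0) (fun p : F2 * F2 => b2 HX HZ Q (nuh l) (muh l) j p.1 p.2)
         in phi p.1 p.2))].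
Proof.
have Ew : forall x z : {ffun 'I_n -> F2}, w4 HX HZ sX sZ Q (phivec x z) = w2 HX HZ sX sZ Q x z.
  move=> x z; rewrite /w4 /w2; congr (_ * _ * _).
  - by apply: eq_bigr => j _; rewrite /Qphi ffunE phiK1 phiK2.
  - apply: eq_bigr => i _; congr (_ %:R); congr (_ == _).
    by apply: eq_bigr => j' _; rewrite ffunE phiK2.
  - apply: eq_bigr => i _; congr (_ %:R); congr (_ == _).
    by apply: eq_bigr => j' _; rewrite ffunE phiK1.
pose P2 l := forall j, (forall i, i \in dvar HX j ->
       propto (fun p : F2 * F2 => mXh l i j (phi p.1 p.2)) (fun p => nuh l i j p.2)) /\
     (forall i, i \in dvar HZ j ->
       propto (fun p : F2 * F2 => mZh l i j (phi p.1 p.2)) (fun p => muh l i j p.1)).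
pose P3 l := forall j, (forall i, i \in dvar HX j ->
       propto (nu l j i) (fun z => \sum_(x : F2) mX l j i (phi x z))) /\
     (forall i, i \in dvar HZ j ->
       propto (mu l j i) (fun x => \sum_(z : F2) mZ l j i (phi x z))).
have A : forall l, P2 l -> P3 l.
  move=> l HP j; split=> i Hi.
  - have [c1 c1p E1] := nu_def l j i Hi.
    have [c2 c2p E2] := mX_def l j i Hi.
    destruct (@prod_propto R _ (index_enum 'I_m) (fun k => k \in dvar HX j :\ i) _
       (fun k p => mXh l k j (phi p.1 p.2)) (fun k p => nuh l k j p.2)) as [C1 C1p EC1].
      move=> k; rewrite in_setD1 => /andP[_ Hk].
      by have [c cp Ec] := (HP j).1 k Hk; exists c => // t; exact: Ec.
    destruct (@prod_propto R _ (index_enum 'I_m) (fun k => k \in dvar HZ j) _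
       (fun k p => mZh l k j (phi p.1 p.2)) (fun k p => muh l k j p.1)) as [C2 C2p EC2].
      move=> k Hk.
      by have [c cp Ec] := (HP j).2 k Hk; exists c => // t; exact: Ec.
    have Kp : 0 < c2 * C1 * C2 by rewrite !mulr_gt0.
    exists (c1 / (c2 * C1 * C2)); first by rewrite divr_gt0.
    move=> z.
    have -> : \sum_(x : F2) mX l j i (phi x z) = (c2 * C1 * C2) * nu_upd HX HZ Q (nuh l) (muh l) j i z.
      rewrite /nu_upd mulr_sumr; apply: eq_bigr => x _.
      rewrite E2 /mX_upd /Qphi phiK1 phiK2.
      have := EC1 (fun _ => (x, z)); have := EC2 (fun _ => (x, z)); rewrite /= => -> ->.
      ring.
    by rewrite E1 mulrA divfK ?gt_eqF.
  - have [c1 c1p E1] := mu_def l j i Hi.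
    have [c2 c2p E2] := mZ_def l j i Hi.
    destruct (@prod_propto R _ (index_enum 'I_m) (fun k => k \in dvar HX j) _
       (fun k p => mXh l k j (phi p.1 p.2)) (fun k p => nuh l k j p.2)) as [C1 C1p EC1].
      move=> k Hk.
      by have [c cp Ec] := (HP j).1 k Hk; exists c => // t; exact: Ec.
    destruct (@prod_propto R _ (index_enum 'I_m) (fun k => k \in dvar HZ j :\ i) _
       (fun k p => mZh l k j (phi p.1 p.2)) (fun k p => muh l k j p.1)) as [C2 C2p EC2].
      move=> k; rewrite in_setD1 => /andP[_ Hk].
      by have [c cp Ec] := (HP j).2 k Hk; exists c => // t; exact: Ec.
    have Kp : 0 < c2 * C1 * C2 by rewrite !mulr_gt0.
    exists (c1 / (c2 * C1 * C2)); first by rewrite divr_gt0.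
    move=> x.
    have -> : \sum_(z : F2) mZ l j i (phi x z) = (c2 * C1 * C2) * mu_upd HX HZ Q (nuh l) (muh l) j i x.
      rewrite /mu_upd mulr_sumr; apply: eq_bigr => z _.
      rewrite E2 /mZ_upd /Qphi phiK1 phiK2.
      have := EC1 (fun _ => (x, z)); have := EC2 (fun _ => (x, z)); rewrite /= => -> ->.
      ring.
    by rewrite E1 mulrA divfK ?gt_eqF.
have B : forall l, P3 l -> P2 l.+1.
  move=> l HP j; split=> i Hi.
  - have Hj : j \in dchk HX i by move: Hi; rewrite !inE.
    have [c1 c1p E1] := mXh_def l i j Hj.
    have [c2 c2p E2] := nuh_def l i j Hj.
    destruct (@prod_propto R _ (index_enum (sub (dchk HX i :\ j))) (fun _ => true) _
       (fun b t => \sum_(u : F2) mX l (val b) i (phi u t)) (fun b t => nu l (val b) i t)) as [C Cp EC].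
      move=> b _; have Hb : i \in dvar HX (val b).
        by have := valP b; rewrite in_setD1 => /andP[_]; rewrite !inE.
      have [c cp Ec] := (HP (val b)).1 i Hb.
      exists c^-1; first by rewrite invr_gt0.
      by move=> t; rewrite Ec mulrA mulVf ?mul1r ?gt_eqF.
    exists (c1 * C / c2); first by rewrite divr_gt0 ?mulr_gt0.
    case=> x z /=.
    rewrite E1 E2 /mXh_upd /nuh_upd phiK2.
    rewrite (@check_sum R _ phi xF4 zF4 phiK1 phiK2 phiK3 (fun b a => mX l (val b) i a)).
    under eq_bigr => w _ do rewrite (EC w).
    rewrite -mulr_sumr; field.
    by rewrite gt_eqF.
  - have Hj : j \in dchk HZ i by move: Hi; rewrite !inE.
    have [c1 c1p E1] := mZh_def l i j Hj.
    have [c2 c2p E2] := muh_def l i j Hj.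
    destruct (@prod_propto R _ (index_enum (sub (dchk HZ i :\ j))) (fun _ => true) _
       (fun b t => \sum_(u : F2) mZ l (val b) i (phi t u)) (fun b t => mu l (val b) i t)) as [C Cp EC].
      move=> b _; have Hb : i \in dvar HZ (val b).
        by have := valP b; rewrite in_setD1 => /andP[_]; rewrite !inE.
      have [c cp Ec] := (HP (val b)).2 i Hb.
      exists c^-1; first by rewrite invr_gt0.
      by move=> t; rewrite Ec mulrA mulVf ?mul1r ?gt_eqF.
    exists (c1 * C / c2); first by rewrite divr_gt0 ?mulr_gt0.
    case=> x z /=.
    rewrite E1 E2 /mZh_upd /muh_upd phiK1.
    rewrite (@check_sum R _ (fun u t => phi t u) zF4 xF4 (fun u t => phiK2 t u) (fun u t => phiK1 t u) phiK3 (fun b a => mZ l (val b) i a)).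
    under eq_bigr => w _ do rewrite (EC w).
    rewrite -mulr_sumr; field.
    by rewrite gt_eqF.
have H2 : forall l, P2 l.
  elim=> [|l IH]; last exact: B (A l IH).
  by move=> j; split=> i Hi; [exact: initX | exact: initZ].
have H4 : forall l j (xi zeta : F2),
    b4 HX HZ Q (mXh l) (mZh l) j (phi xi zeta) = b2 HX HZ Q (nuh l) (muh l) j xi zeta.
  move=> l j.
  destruct (@prod_propto R _ (index_enum 'I_m) (fun k => k \in dvar HX j) _
     (fun k p => mXh l k j (phi p.1 p.2)) (fun k p => nuh l k j p.2)) as [C1 C1p EC1].
    move=> k Hk.
    by have [c cp Ec] := (H2 l j).1 k Hk; exists c => // t; exact: Ec.
  destruct (@prod_propto R _ (index_enum 'I_m) (fun k => k \in dvar HZ j) _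
     (fun k p => mZh l k j (phi p.1 p.2)) (fun k p => muh l k j p.1)) as [C2 C2p EC2].
    move=> k Hk.
    by have [c cp Ec] := (H2 l j).2 k Hk; exists c => // t; exact: Ec.
  have Eb : forall x z, b4u HX HZ Q (mXh l) (mZh l) j (phi x z) = (C1 * C2) * b2u HX HZ Q (nuh l) (muh l) j x z.
    move=> x z; rewrite /b4u /b2u /Qphi phiK1 phiK2.
    have := EC1 (fun _ => (x, z)); have := EC2 (fun _ => (x, z)); rewrite /= => -> ->.
    ring.
  move=> xi zeta; rewrite /b4 /b2 sumF4 Eb.
  have -> : \sum_(x : F2) \sum_(z : F2) b4u HX HZ Q (mXh l) (mZh l) j (phi x z) =
     (C1 * C2) * \sum_(x : F2) \sum_(z : F2) b2u HX HZ Q (nuh l) (muh l) j x z.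
    rewrite mulr_sumr; apply: eq_bigr => x _; rewrite mulr_sumr; apply: eq_bigr => z _.
    exact: Eb.
  by rewrite -mulf_div divff ?mul1r // gt_eqF // mulr_gt0.
split.
- move=> x z; rewrite /P4 /P2 Ew; congr (_ / _).
  rewrite /Z4 /Z2 (@sum_ffunF4 R _ phi xF4 zF4 phiK1 phiK2 phiK3).
  by apply: eq_bigr => x' _; apply: eq_bigr => z' _; exact: Ew.
- exact: H2.
- move=> l; exact: A (H2 l).
- exact: H4.
- move=> s _ _ l j; rewrite /argmax_by filter_map /=.
  rewrite (@eq_filter _ _ (fun p : F2 * F2 => [forall q, b2 HX HZ Q (nuh l) (muh l) j q.1 q.2 <= b2 HX HZ Q (nuh l) (muh l) j p.1 p.2])).
    by case: [seq _ <- s | _].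
  move=> p /=; apply/forallP/forallP => H q.
    by have := H (phi q.1 q.2); rewrite !H4.
  by rewrite -(phiK3 q) H4 H4; exact: (H (xF4 q, zF4 q)).
Qed.
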